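(* (1) For any complete consistent first-order theory $T$, ${\rm deg}_{\rm acl}(T)\in(\omega\setminus\{0\})\cup\{\omega\}\cup\{\infty\}$. (2) For every $\lambda\in(\omega\setminus\{0\})\cup\{\omega,\infty\}$ there is a complete theory $T_\lambda$ with ${\rm deg}_{\rm acl}(T_\lambda)=\lambda$.
   Context: Let $T$ be a complete theory with monster model $\mathcal{M}$; sets of $T$ are subsets $A\subseteq M$. For $n\in\omega\setminus\{0\}$, ${\rm acl}_n(A)$ is the set of elements $b$ such that for some formula $\varphi(x,\overline{y})$ and tuple $\overline{a}$ from $A$, $\models\varphi(b,\overline{a})$ and $\varphi(x,\overline{a})$ has at most $n$ solutions; ${\rm acl}(A)$ is the usual algebraic closure. The degree of algebraization ${\rm deg}_{\rm acl}(A)$ is the least $n\in\omega\setminus\{0\}$ with ${\rm acl}(A)={\rm acl}_n(A)$, and ${\rm deg}_{\rm acl}(A)=\infty$ if there is no such $n$. The degree of algebraization ${\rm deg}_{\rm acl}(T)$ is the supremum of ${\rm deg}_{\rm acl}(A)$ over all sets $A$ of $T$, in the order $1<2<\dots<\omega<\infty$ (so it is $\infty$ if some $A$ has degree $\infty$, and $\omega$ if all degrees are finite but unbounded). *)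

(* Defs.v *)
From Stdlib Require Import Arith List Fin.
Import ListNotations.

Record signature : Type := {
  funs : Type;
  rels : Type;
  fun_ar : funs -> nat;
  rel_ar : rels -> nat
}.

Inductive term (L : signature) : Type :=
| tvar : nat -> term L
| tapp : forall f : funs L, (Fin.t (fun_ar L f) -> term L) -> term L.

Inductive formula (L : signature) : Type :=
| fFalse : formula L
| fEq : term L -> term L -> formula L
| fRel : forall r : rels L, (Fin.t (rel_ar L r) -> term L) -> formula L
| fImp : formula L -> formula L -> formula L
| fAll : formula L -> formula L.   (* binds variable 0 (de Bruijn) *)

Arguments tvar {L}. Arguments tapp {L}.
Arguments fFalse {L}. Arguments fEq {L}. Arguments fRel {L}.
Arguments fImp {L}. Arguments fAll {L}.

Definition fNot {L} (p : formula L) : formula L := fImp p fFalse.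

Record structure (L : signature) : Type := {
  carrier :> Type;
  fun_int : forall f : funs L, (Fin.t (fun_ar L f) -> carrier) -> carrier;
  rel_int : forall r : rels L, (Fin.t (rel_ar L r) -> carrier) -> Prop
}.
Arguments fun_int {L}. Arguments rel_int {L}.

Definition scons {X : Type} (x : X) (e : nat -> X) : nat -> X :=
  fun n => match n with 0 => x | S m => e m end.

Fixpoint eval {L} (M : structure L) (e : nat -> M) (t : term L) : M :=
  match t with
  | tvar n => e n
  | tapp f args => fun_int M f (fun i => eval M e (args i))
  end.

Fixpoint sat {L} (M : structure L) (e : nat -> M) (p : formula L) : Prop :=
  match p with
  | fFalse => False
  | fEq t u => eval M e t = eval M e u
  | fRel r args => rel_int M r (fun i => eval M e (args i))
  | fImp p q => sat M e p -> sat M e q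
  | fAll p => forall d : M, sat M (scons d e) p
  end.

Fixpoint term_bound {L} (k : nat) (t : term L) : Prop :=
  match t with
  | tvar n => n < k
  | tapp f args => forall i, term_bound k (args i)
  end.

Fixpoint bound {L} (k : nat) (p : formula L) : Prop :=
  match p with
  | fFalse => True
  | fEq t u => term_bound k t /\ term_bound k u
  | fRel r args => forall i, term_bound k (args i)
  | fImp p q => bound k p /\ bound k q
  | fAll p => bound (S k) p
  end.

Definition sentence {L} (p : formula L) : Prop := bound 0 p.

Definition theory (L : signature) : Type := formula L -> Prop.

(* M is a model of T (structures have nonempty universes; the members of T
   are sentences, so the environment is irrelevant). *)
Definition is_model {L} (T : theory L) (M : structure L) : Prop :=
  inhabited (carrier L M) /\ forall p, T p -> forall e : nat -> M, sat M e p.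

(* T is a complete consistent theory: a set of sentences having a model and
   deciding every sentence (semantically; equivalent to the syntactic notion
   by the completeness theorem). *)
Definition complete_theory {L} (T : theory L) : Prop :=
  (forall p, T p -> sentence p) /\
  (exists M : structure L, is_model T M) /\
  (forall p, sentence p ->
     (forall (M : structure L), is_model T M -> forall e : nat -> M, sat M e p) \/
     (forall (M : structure L), is_model T M -> forall e : nat -> M, sat M e (fNot p))).

(* acl_n(A) in M: b satisfies some phi(x, a_0..a_{k-1}) (x = variable 0,
   a_i = variable i+1, parameters from A) having at most n solutions. *)
Definition acl_n {L} (M : structure L) (A : M -> Prop) (n : nat) (b : M) : Prop :=
  exists (p : formula L) (k : nat) (a : nat -> M),
    bound (S k) p /\ (forall i, i < k -> A (a i)) /\
    sat M (scons b a) p /\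
    exists l : list M, length l <= n /\
      forall c : M, sat M (scons c a) p -> In c l.

Definition acl {L} (M : structure L) (A : M -> Prop) (b : M) : Prop :=
  exists n, acl_n M A n b.

(* Values 1 < 2 < ... < omega < infinity (dFin 0 is not a legal value). *)
Inductive dval : Type := dFin (n : nat) | dOmega | dInfty.

Definition dle (x y : dval) : Prop :=
  match x, y with
  | dFin m, dFin n => m <= n
  | dFin _, _ => True
  | dOmega, dFin _ => False
  | dOmega, _ => True
  | dInfty, dInfty => True
  | dInfty, _ => False
  end.

Definition degA_is {L} (M : structure L) (A : M -> Prop) (d : dval) : Prop :=
  match d with
  | dFin n => 1 <= n /\ (forall b, acl M A b <-> acl_n M A n b) /\
              (forall m, 1 <= m -> (forall b, acl M A b <-> acl_n M A m b) -> n <= m)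
  | dOmega => False
  | dInfty => forall n, 1 <= n -> ~ (forall b, acl M A b <-> acl_n M A n b)
  end.

Definition set_degree {L} (T : theory L) (d : dval) : Prop :=
  exists (M : structure L) (A : M -> Prop), is_model T M /\ degA_is M A d.

Definition degT_is {L} (T : theory L) (d : dval) : Prop :=
  (forall e, set_degree T e -> dle e d) /\
  (forall u, (forall e, set_degree T e -> dle e u) -> dle d u).

(* Main.v *)
Require Import Defs.
From Stdlib Require Import Arith List Lia ZArith Classical ClassicalEpsilon FunctionalExtensionality Eqdep_dec.
Import ListNotations.

Definition fAnd {L} (p q : formula L) := fNot (fImp p (fNot q)).
Definition fOr {L} (p q : formula L) := fImp (fNot p) q.
Definition fEx {L} (p : formula L) := fNot (fAll (fNot p)).

Section Gen.
Context {L : signature}.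

Lemma sat_and (M : structure L) e p q : sat M e (fAnd p q) <-> sat M e p /\ sat M e q.
Proof. unfold fAnd, fNot; simpl. split; [intro H|tauto].
  destruct (classic (sat M e p)); [|tauto]. destruct (classic (sat M e q)); tauto. Qed.

Lemma sat_or (M : structure L) e p q : sat M e (fOr p q) <-> sat M e p \/ sat M e q.
Proof. unfold fOr, fNot; simpl. split; [intro H|tauto].
  destruct (classic (sat M e p)); tauto. Qed.

Lemma sat_not (M : structure L) e p : sat M e (fNot p) <-> ~ sat M e p.
Proof. reflexivity. Qed.

Lemma sat_ex (M : structure L) e p : sat M e (fEx p) <-> exists d, sat M (scons d e) p.
Proof. unfold fEx, fNot; simpl. split.
  - intro H. apply NNPP. intro H'. apply H. intros d Hd. apply H'. eauto.
  - intros [d Hd] H. eapply H; eauto. Qed.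

Lemma eval_agree (M : structure L) : forall t k e e', term_bound k t ->
  (forall i, i < k -> e i = e' i) -> eval M e t = eval M e' t.
Proof. induction t; simpl; intros k e e' Hb Ha.
  - apply Ha; auto.
  - f_equal. apply functional_extensionality. intro i. eapply H; eauto. Qed.

Lemma sat_agree (M : structure L) : forall p k e e', bound k p ->
  (forall i, i < k -> e i = e' i) -> (sat M e p <-> sat M e' p).
Proof. induction p; simpl; intros k e e' Hb Ha.
  - tauto.
  - destruct Hb. rewrite (eval_agree M t k e e'), (eval_agree M t0 k e e'); auto. tauto.
  - replace (fun i => eval M e (t i)) with (fun i => eval M e' (t i)). tauto.
    apply functional_extensionality. intro i. symmetry. eapply eval_agree; eauto.
  - destruct Hb. rewrite (IHp1 k e e'), (IHp2 k e e'); auto. tauto.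
  - split; intros H d.
    + rewrite <- (IHp (S k) (scons d e) (scons d e')); auto. intros [|i] Hi; simpl; auto. apply Ha; lia.
    + rewrite (IHp (S k) (scons d e) (scons d e')); auto. intros [|i] Hi; simpl; auto. apply Ha; lia.
Qed.

Lemma term_bound_mono : forall (t : term L) k k', term_bound k t -> k <= k' -> term_bound k' t.
Proof. induction t; simpl; intros; eauto. lia. Qed.

Lemma bound_mono : forall (p : formula L) k k', bound k p -> k <= k' -> bound k' p.
Proof. induction p; simpl; intros; intuition eauto using term_bound_mono.
  eapply IHp; eauto; lia. Qed.

Lemma fin_max : forall n (P : Fin.t n -> nat -> Prop), (forall i, exists k, P i k) ->
  (forall i k k', P i k -> k <= k' -> P i k') -> exists K, forall i, P i K.
Proof. induction n; intros P H Hm.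
  - exists 0. intro i. inversion i.
  - destruct (H Fin.F1) as [k1 Hk1].
    destruct (IHn (fun i => P (Fin.FS i))) as [K HK]; auto.
    + intros i k k' ? ?; eapply Hm; eauto.
    + exists (max k1 K). intro i. revert P H Hm Hk1 HK.
      pattern i. apply Fin.caseS'; intros; eapply Hm; eauto; lia.
Qed.

Lemma term_bound_ex : forall t : term L, exists k, term_bound k t.
Proof. induction t; simpl.
  - exists (S n); lia.
  - apply (fin_max _ (fun i k => term_bound k (t i))); auto.
    intros; eapply term_bound_mono; eauto. Qed.

Lemma bound_ex : forall p : formula L, exists k, bound k p.
Proof. induction p; simpl.
  - exists 0; auto.
  - destruct (term_bound_ex t) as [k1 ?], (term_bound_ex t0) as [k2 ?].
    exists (max k1 k2); split; eapply term_bound_mono; eauto; lia.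
  - apply (fin_max _ (fun i k => term_bound k (t i))); auto using term_bound_ex.
    intros; eapply term_bound_mono; eauto.
  - destruct IHp1 as [k1 ?], IHp2 as [k2 ?]. exists (max k1 k2); split; eapply bound_mono; eauto; lia.
  - destruct IHp as [k ?]. exists k. eapply bound_mono; eauto.
Qed.

Fixpoint trename (xi : nat -> nat) (t : term L) : term L :=
  match t with
  | tvar n => tvar (xi n)
  | tapp f args => tapp f (fun i => trename xi (args i))
  end.
Definition upr (xi : nat -> nat) : nat -> nat := fun n => match n with 0 => 0 | S m => S (xi m) end.
Fixpoint frename (xi : nat -> nat) (p : formula L) : formula L :=
  match p with
  | fFalse => fFalse
  | fEq t u => fEq (trename xi t) (trename xi u)
  | fRel r args => fRel r (fun i => trename xi (args i))
  | fImp p q => fImp (frename xi p) (frename xi q)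
  | fAll p => fAll (frename (upr xi) p)
  end.

Lemma eval_rename (M : structure L) : forall t xi e,
  eval M e (trename xi t) = eval M (fun n => e (xi n)) t.
Proof. induction t; simpl; intros; auto. f_equal. apply functional_extensionality; auto. Qed.

Lemma sat_rename (M : structure L) : forall p xi e,
  sat M e (frename xi p) <-> sat M (fun n => e (xi n)) p.
Proof. induction p; simpl; intros xi e.
  - tauto.
  - rewrite !eval_rename. tauto.
  - replace (fun i => eval M e (trename xi (t i))) with (fun i => eval M (fun n => e (xi n)) (t i)). tauto.
    apply functional_extensionality; intro; rewrite eval_rename; auto.
  - rewrite IHp1, IHp2. tauto.
  - split; intros H d; specialize (H d); rewrite ?IHp in *;
    replace (fun n => scons d e (upr xi n)) with (scons d (fun n => e (xi n))) in *; auto;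
    apply functional_extensionality; intros [|n]; reflexivity.
Qed.

Definition Th (M0 : structure L) : theory L := fun p => sentence p /\ forall e, sat M0 e p.

Fixpoint fAlls k (p : formula L) := match k with 0 => p | S k => fAll (fAlls k p) end.

Lemma bound_fAlls : forall k m p, bound m (fAlls k p) <-> bound (m + k) p.
Proof. induction k; simpl; intros. rewrite Nat.add_0_r; tauto.
  rewrite IHk. replace (S m + k) with (m + S k) by lia. tauto. Qed.

Lemma sat_fAlls_intro (M : structure L) p : (forall e, sat M e p) -> forall k e, sat M e (fAlls k p).
Proof. intros H k; induction k; simpl; auto. Qed.

Lemma sat_fAlls_elim (M : structure L) : forall k p e, sat M e (fAlls k p) ->
  forall e', sat M (fun i => if i <? k then e' i else e (i - k)) p.
Proof. induction k; simpl; intros p e H e'.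
  - replace (fun i => e (i - 0)) with e; auto. apply functional_extensionality; intro; f_equal; lia.
  - specialize (IHk p (scons (e' k) e) (H (e' k)) e').
    replace (fun i => if i <? S k then e' i else e (i - S k)) with
      (fun i => if i <? k then e' i else scons (e' k) e (i - k)); auto.
    apply functional_extensionality; intro i.
    destruct (Nat.ltb_spec i k), (Nat.ltb_spec i (S k)); try lia; auto.
    + replace i with k by lia. rewrite Nat.sub_diag. reflexivity.
    + replace (i - k) with (S (i - S k)) by lia. reflexivity.
Qed.

Lemma transfer (M0 : structure L) p : (forall e, sat M0 e p) ->
  forall M, is_model (Th M0) M -> forall e, sat M e p.
Proof. intros H M [_ HM] e.
  destruct (bound_ex p) as [k Hk].
  assert (Hs : Th M0 (fAlls k p)).
  { split. unfold sentence. apply bound_fAlls. auto. apply sat_fAlls_intro; auto. }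
  pose proof (sat_fAlls_elim M k p e (HM _ Hs e) e) as H1.
  rewrite (sat_agree M p k _ e Hk) in H1; auto.
  intros i Hi. destruct (Nat.ltb_spec i k); auto; lia.
Qed.

Lemma Th_complete (M0 : structure L) : inhabited M0 -> complete_theory (Th M0).
Proof. intro Hi. split; [|split].
  - intros p [Hp _]; auto.
  - exists M0. split; auto. intros p [_ Hp]; auto.
  - intros p Hp. destruct Hi as [x0].
    destruct (classic (sat M0 (fun _ => x0) p)) as [H|H].
    + left. intros M HM e. apply (proj2 HM). split; auto.
      intro e'. rewrite (sat_agree M0 p 0 e' (fun _ => x0)); auto. intros; lia.
    + right. intros M HM e. apply (proj2 HM). split.
      * unfold sentence, fNot; simpl; auto.
      * intro e'. unfold fNot; simpl. rewrite (sat_agree M0 p 0 e' (fun _ => x0)); auto. intros; lia.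
Qed.

Definition is_auto (M : structure L) (s : M -> M) : Prop :=
  (exists t : M -> M, forall x, s (t x) = x /\ t (s x) = x) /\
  (forall f args, fun_int M f (fun i => s (args i)) = s (fun_int M f args)) /\
  (forall r args, rel_int M r (fun i => s (args i)) <-> rel_int M r args).

Lemma auto_eval (M : structure L) s : is_auto M s -> forall t e,
  eval M (fun n => s (e n)) t = s (eval M e t).
Proof. intros [_ [Hf _]]. induction t; simpl; intros; auto.
  rewrite <- Hf. f_equal. apply functional_extensionality; auto. Qed.

Lemma auto_sat (M : structure L) s : is_auto M s -> forall p e,
  sat M (fun n => s (e n)) p <-> sat M e p.
Proof. intro Ha. pose proof Ha as [[t Ht] [Hf Hr]].
  induction p; simpl; intros e.
  - tauto.
  - rewrite !(auto_eval M s Ha). split; intro H; [|congruence].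
    rewrite <- (proj2 (Ht (eval M e t0))), <- (proj2 (Ht (eval M e t1))). congruence.
  - replace (fun i => eval M (fun n => s (e n)) (t0 i)) with (fun i => s (eval M e (t0 i))). apply Hr.
    apply functional_extensionality; intro; rewrite (auto_eval M s Ha); auto.
  - rewrite IHp1, IHp2; tauto.
  - split; intros H d.
    + rewrite <- IHp. specialize (H (s d)).
      replace (fun n => s (scons d e n)) with (scons (s d) (fun n => s (e n))); auto.
      apply functional_extensionality; intros [|n]; reflexivity.
    + specialize (H (t d)). rewrite <- IHp in H.
      replace (scons d (fun n => s (e n))) with (fun n => s (scons (t d) e n)); auto.
      apply functional_extensionality; intros [|n]; simpl; auto. apply Ht.
Qed.

Lemma auto_moves (M : structure L) s p k (a : nat -> M) b : is_auto M s -> bound (S k) p ->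
  (forall i, i < k -> s (a i) = a i) -> sat M (scons b a) p -> sat M (scons (s b) a) p.
Proof. intros Ha Hb Hf H. rewrite <- (auto_sat M s Ha) in H.
  rewrite (sat_agree M p (S k) _ (scons (s b) a) Hb) in H; auto.
  intros [|i] Hi; simpl; auto. apply Hf; lia. Qed.

Lemma orbit_bound (M : structure L) p k (a : nat -> M) b (Lc : list M) :
  bound (S k) p -> sat M (scons b a) p -> NoDup Lc ->
  (forall c, In c Lc -> exists s, is_auto M s /\ (forall i, i < k -> s (a i) = a i) /\ s b = c) ->
  forall l, (forall c, sat M (scons c a) p -> In c l) -> length Lc <= length l.
Proof. intros Hb Hs Hnd Hc l Hl. apply NoDup_incl_length; auto.
  intros c Hin. destruct (Hc c Hin) as [s [Ha [Hf Hsb]]]. apply Hl. subst c.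
  eapply auto_moves; eauto. Qed.

Lemma acl_n_mono (M : structure L) A n m b : acl_n M A n b -> n <= m -> acl_n M A m b.
Proof. intros [p [k [a [H1 [H2 [H3 [l [H4 H5]]]]]]]] Hnm.
  exists p, k, a; repeat split; auto. exists l; split; auto; lia. Qed.

Lemma acl_n_intro (M : structure L) (A : M -> Prop) p (a : nat -> M) b l n :
  (forall i, A (a i)) -> sat M (scons b a) p -> length l <= n ->
  (forall c, sat M (scons c a) p -> In c l) -> acl_n M A n b.
Proof. intros HA Hs Hl Hc. destruct (bound_ex p) as [k Hk].
  exists p, k, a. repeat split; auto. eapply bound_mono; eauto. exists l; split; auto. Qed.

Lemma acl_n_acl (M : structure L) A n b : acl_n M A n b -> acl M A b.
Proof. intro; exists n; auto. Qed.

Lemma nat_min (P : nat -> Prop) : (exists n, P n) -> exists n, P n /\ forall m, P m -> n <= m.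
Proof. intros [n Hn]. induction n as [n IH] using (well_founded_induction lt_wf).
  destruct (classic (exists m, m < n /\ P m)) as [[m [Hm1 Hm2]]|H].
  - apply (IH m Hm1 Hm2).
  - exists n; split; auto. intros m Hm. destruct (Nat.lt_ge_cases m n); auto.
    exfalso; apply H; eauto. Qed.

Lemma degree_exists (M : structure L) (A : M -> Prop) :
  (exists n, degA_is M A (dFin n)) \/ degA_is M A dInfty.
Proof.
  destruct (classic (exists n, 1 <= n /\ forall b, acl M A b <-> acl_n M A n b)) as [H|H].
  - left. destruct (nat_min _ H) as [n [[H1 H2] H3]]. exists n. simpl. split; [auto|split; [auto|]].
    intros m Hm1 Hm2. apply H3. auto.
  - right. simpl. intros n Hn Hb. apply H. eauto.
Qed.

End Gen.


Lemma set_degree_fin_pos {L} (T : theory L) m : set_degree T (dFin m) -> 1 <= m.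
Proof. intros [M [A [_ [H _]]]]. auto. Qed.

Lemma set_degree_not_omega {L} (T : theory L) : ~ set_degree T dOmega.
Proof. intros [M [A [_ H]]]. exact H. Qed.

Theorem part1 : forall (L : signature) (T : theory L), complete_theory T ->
     exists d : dval, degT_is T d /\ d <> dFin 0.
Proof.
  intros L T [_ [[M HM] _]].
  assert (Hex : exists e, set_degree T e).
  { destruct (degree_exists M (fun _ => False)) as [[n Hn]|Hn].
    - exists (dFin n), M, (fun _ => False); auto.
    - exists dInfty, M, (fun _ => False); auto. }
  destruct (classic (set_degree T dInfty)) as [Hinf|Hinf].
  - exists dInfty. split; [split|]; try discriminate.
    + intros [] _; simpl; auto.
    + intros u Hu. apply Hu; auto.
  - destruct (classic (exists N, forall m, set_degree T (dFin m) -> m <= N)) as [Hb|Hb].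
    + destruct (nat_min _ Hb) as [K [HK1 HK2]].
      assert (HPK : set_degree T (dFin K)).
      { apply NNPP; intro HnP.
        destruct K as [|K].
        - destruct Hex as [[m| |] He].
          + pose proof (set_degree_fin_pos T m He). specialize (HK1 m He). lia.
          + exact (set_degree_not_omega T He).
          + exact (Hinf He).
        - assert (K + 1 <= K); [|lia]. replace (K+1) with (S K) by lia.
          apply HK2. intros m Hm. specialize (HK1 m Hm).
          destruct (Nat.eq_dec m (S K)); [subst; contradiction|lia]. }
      exists (dFin K). split; [split|].
      * intros [m| |] He; simpl; auto; try exact (set_degree_not_omega T He); try exact (Hinf He).
      * intros u Hu. apply Hu; auto.
      * pose proof (set_degree_fin_pos T K HPK). intro Hc; inversion Hc; lia.
    + exists dOmega. split; [split|]; try discriminate.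
      * intros [m| |] He; simpl; auto; try exact (set_degree_not_omega T He); try exact (Hinf He).
      * intros [N| |] Hu; simpl; auto. apply Hb. exists N. intros m Hm. apply (Hu _ Hm).
Qed.


Section AM.
Context {L : signature}.

Fixpoint Exs k (p : formula L) := match k with 0 => p | S k => fEx (Exs k p) end.

Definition pref {X} k (f e : nat -> X) : nat -> X := fun j => if j <? k then f j else e (j - k).

Lemma sat_Exs (M : structure L) : forall k p e,
  sat M e (Exs k p) <-> exists f : nat -> M, sat M (pref k f e) p.
Proof. induction k; intros p e; cbn [Exs].
  - unfold pref. split.
    + intro H; exists e. replace (fun j => if j <? 0 then e j else e (j - 0)) with e; auto.
      apply functional_extensionality; intro j; simpl; f_equal; lia.
    + intros [f H]. replace e with (fun j => if j <? 0 then f j else e (j - 0)); auto.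
      apply functional_extensionality; intro j; simpl; f_equal; lia.
  - rewrite sat_ex. split.
    + intros [d Hd]. rewrite IHk in Hd. destruct Hd as [f Hf].
      exists (fun j => if j <? k then f j else d).
      replace (pref (S k) (fun j => if j <? k then f j else d) e) with (pref k f (scons d e)); auto.
      unfold pref; apply functional_extensionality; intro j.
      destruct (Nat.ltb_spec j k), (Nat.ltb_spec j (S k)); try lia; auto.
      * replace j with k by lia. rewrite Nat.sub_diag. simpl. try rewrite Nat.ltb_irrefl. auto.
      * replace (j - k) with (S (j - S k)) by lia. reflexivity.
    + intros [f Hf]. exists (f k). rewrite IHk. exists f.
      replace (pref k f (scons (f k) e)) with (pref (S k) f e); auto.
      unfold pref; apply functional_extensionality; intro j.
      destruct (Nat.ltb_spec j k), (Nat.ltb_spec j (S k)); try lia; auto.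
      * replace j with k by lia. rewrite Nat.sub_diag. auto.
      * replace (j - k) with (S (j - S k)) by lia. reflexivity.
Qed.

Fixpoint disj (s : nat) : formula L :=
  match s with 0 => fFalse | S s => fOr (fEq (tvar 0) (tvar (S s))) (disj s) end.

Lemma sat_disj (M : structure L) : forall s e, sat M e (disj s) <-> exists j, 1 <= j <= s /\ e 0 = e j.
Proof. induction s; intros e; cbn [disj].
  - simpl. split; [tauto|]. intros [j [? _]]; lia.
  - rewrite sat_or, IHs. simpl. split.
    + intros [H|[j [Hj H]]]; [exists (S s)|exists j]; split; auto; lia.
    + intros [j [Hj H]]. destruct (Nat.eq_dec j (S s)); [subst; auto|right; exists j; split; auto; lia].
Qed.

Definition amxi (s : nat) : nat -> nat := fun n => match n with 0 => 0 | S j => S (j + s) end.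

Definition AM (s : nat) (chi : formula L) : formula L :=
  Exs s (fAll (fImp (frename (amxi s) chi) (disj s))).

Lemma sat_AM (M : structure L) s chi e :
  sat M e (AM s chi) <-> exists l, length l = s /\ forall z, sat M (scons z e) chi -> In z l.
Proof. unfold AM. rewrite sat_Exs. split.
  - intros [f Hf]. exists (map f (seq 0 s)). rewrite length_map, length_seq. split; auto.
    intros z Hz. simpl in Hf. specialize (Hf z). rewrite sat_rename, sat_disj in Hf.
    destruct Hf as [j [Hj Hz']].
    + replace (fun n => scons z (pref s f e) (amxi s n)) with (scons z e); auto.
      apply functional_extensionality; intros [|n]; simpl; auto. unfold pref.
      destruct (Nat.ltb_spec (n + s) s); try lia. f_equal; lia.
    + simpl in Hz'. destruct j as [|j]; [lia|]. simpl in Hz'. unfold pref in Hz'.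
      destruct (Nat.ltb_spec j s); try lia. rewrite Hz'. apply in_map. apply in_seq. lia.
  - intros [l [Hl Hc]]. exists (fun j => nth j l (e 0)). simpl. intros z Hz.
    rewrite sat_rename in Hz. rewrite sat_disj.
    replace (fun n => scons z (pref s (fun j => nth j l (e 0)) e) (amxi s n)) with (scons z e) in Hz.
    + destruct (In_nth l z (e 0) (Hc z Hz)) as [j [Hj Hn]]. exists (S j). split; [lia|].
      simpl. unfold pref. destruct (Nat.ltb_spec j s); try lia. auto.
    + apply functional_extensionality; intros [|n]; simpl; auto. unfold pref.
      destruct (Nat.ltb_spec (n + s) s); try lia. f_equal; lia.
Qed.

Lemma pad_list {X} (d : X) (P : X -> Prop) l s : length l <= s -> (forall z, P z -> In z l) ->
  exists l', length l' = s /\ forall z, P z -> In z l'.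
Proof. intros Hl Hc. exists (l ++ repeat d (s - length l)). rewrite length_app, repeat_length.
  split; [lia|]. intros z Hz. apply in_or_app; auto. Qed.

Lemma acl_n_intro0 (M : structure L) (A : M -> Prop) p (a : nat -> M) b l n :
  bound 1 p -> sat M (scons b a) p -> length l <= n ->
  (forall c, sat M (scons c a) p -> In c l) -> acl_n M A n b.
Proof. intros Hb Hs Hl Hc. exists p, 0, a. repeat split; auto. intros; lia. exists l; split; auto. Qed.

End AM.

Lemma NoDup_map_inj {A B} (f : A -> B) (l : list A) :
  (forall x y, In x l -> In y l -> f x = f y -> x = y) -> NoDup l -> NoDup (map f l).
Proof. intros Hi Hn. induction Hn; simpl; constructor.
  - intro H1. apply in_map_iff in H1. destruct H1 as [y [Hy Hin]].
    assert (y = x) by (apply Hi; simpl; auto). subst; auto.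
  - apply IHHn. intros; apply Hi; simpl; auto. Qed.

Definition tswap {X} (x0 y0 z : X) : X :=
  if excluded_middle_informative (z = x0) then y0
  else if excluded_middle_informative (z = y0) then x0 else z.

Lemma tswap_invol {X} (x0 y0 z : X) : tswap x0 y0 (tswap x0 y0 z) = z.
Proof. unfold tswap.
  repeat (destruct excluded_middle_informative; subst; try congruence). Qed.

Lemma tswap_x {X} (x0 y0 : X) : tswap x0 y0 x0 = y0.
Proof. unfold tswap. destruct excluded_middle_informative; congruence. Qed.

Lemma tswap_other {X} (x0 y0 z : X) : z <> x0 -> z <> y0 -> tswap x0 y0 z = z.
Proof. unfold tswap. intros. repeat destruct excluded_middle_informative; congruence. Qed.

Fixpoint all_fin (n : nat) : list (Fin.t n) :=
  match n with 0 => [] | S m => Fin.F1 :: map Fin.FS (all_fin m) end.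

Lemma all_fin_in : forall n (i : Fin.t n), In i (all_fin n).
Proof. induction i; simpl; auto. right. apply in_map; auto. Qed.

Lemma all_fin_nodup : forall n, NoDup (all_fin n).
Proof. induction n; simpl; constructor.
  - intro H. apply in_map_iff in H. destruct H as [x [H _]]. inversion H.
  - apply NoDup_map_inj; auto. intros x y _ _ H. apply Fin.FS_inj; auto. Qed.

Lemma all_fin_length : forall n, length (all_fin n) = n.
Proof. induction n; simpl; auto. rewrite length_map; auto. Qed.

Lemma model_self {L} (M0 : structure L) : inhabited M0 -> is_model (Th M0) M0.
Proof. intros Hi. split; auto. intros p [_ H]; auto. Qed.

Lemma degT_fin {L} (M0 : structure L) n : 1 <= n -> inhabited M0 ->
  (forall M, is_model (Th M0) M -> forall A b, acl M A b -> acl_n M A n b) ->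
  (exists A, degA_is M0 A (dFin n)) -> degT_is (Th M0) (dFin n).
Proof. intros Hn Hi Hup [A0 HA0]. split.
  - intros [m| |] [M [A [HM Hd]]]; simpl in *.
    + destruct Hd as [_ [_ Hmin]]. apply Hmin; auto. intro b; split; [apply Hup; auto|apply acl_n_acl].
    + auto.
    + apply (Hd n Hn). intro b; split; [apply Hup; auto|apply acl_n_acl].
  - intros u Hu. apply Hu. exists M0, A0. split; auto. apply model_self; auto.
Qed.


Lemma degT_inf {L} (M0 : structure L) : inhabited M0 ->
  (exists A, degA_is M0 A dInfty) -> degT_is (Th M0) dInfty.
Proof. intros Hi [A0 HA0]. split.
  - intros [] _; simpl; auto.
  - intros u Hu. apply Hu. exists M0, A0. split; auto using model_self.
Qed.

Lemma degT_omega {L} (M0 : structure L) : inhabited M0 ->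
  (forall M, is_model (Th M0) M -> forall A, exists N, 1 <= N /\ forall b, acl M A b -> acl_n M A N b) ->
  (forall N, exists A b, acl M0 A b /\ ~ acl_n M0 A N b) -> degT_is (Th M0) dOmega.
Proof. intros Hi Hup Hlow. split.
  - intros [m| |] [M [A [HM Hd]]]; simpl in *; auto.
    destruct (Hup M HM A) as [N [HN HNb]]. apply (Hd N HN). intro b; split; [apply HNb|apply acl_n_acl].
  - intros [N| |] Hu; simpl; auto.
    destruct (Hlow N) as [A [b [Hb Hnb]]].
    destruct (degree_exists M0 A) as [[m Hm]|Hm].
    + assert (Hle := Hu (dFin m) (ex_intro _ M0 (ex_intro _ A (conj (model_self M0 Hi) Hm)))).
      simpl in Hle. destruct Hm as [_ [Hm _]]. apply Hnb. eapply acl_n_mono; [apply Hm; auto|auto].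
    + exact (Hu dInfty (ex_intro _ M0 (ex_intro _ A (conj (model_self M0 Hi) Hm)))).
Qed.

Definition L0 : signature := {| funs := Empty_set; rels := Empty_set;
  fun_ar := fun (f : Empty_set) => match f with end; rel_ar := fun (r : Empty_set) => match r with end |}.

Definition Mfin (n : nat) : structure L0 := @Build_structure L0 (Fin.t n)
  (fun (f : funs L0) => Empty_set_rect (fun _ => (Fin.t (fun_ar L0 f) -> Fin.t n) -> Fin.t n) f)
  (fun (r : rels L0) => Empty_set_rect (fun _ => (Fin.t (rel_ar L0 r) -> Fin.t n) -> Prop) r).

Lemma tswap_auto0 n (x y : Mfin n) : is_auto (Mfin n) (tswap x y).
Proof. split; [|split].
  - exists (tswap x y); intro; split; apply tswap_invol.
  - intros [].
  - intros []. Qed.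

Lemma fin_case (n : nat) : 1 <= n -> degT_is (Th (Mfin n)) (dFin n).
Proof. intros Hn. destruct n as [|n']; [lia|].
  assert (Hi : inhabited (Mfin (S n'))) by (constructor; exact Fin.F1).
  set (n := S n') in *.
  assert (Hup : forall M, is_model (Th (Mfin n)) M -> forall A b, acl_n M A n b).
  { intros M HM A b.
    assert (Hv : forall e, sat (Mfin n) e (AM n (fEq (tvar 0) (tvar 0)))).
    { intro e. rewrite sat_AM. exists (all_fin n). split. apply all_fin_length.
      intros z _. apply all_fin_in. }
    pose proof (transfer _ _ Hv M HM (fun _ => b)) as H. rewrite sat_AM in H.
    destruct H as [l [Hl Hc]].
    apply (acl_n_intro0 M A (fEq (tvar 0) (tvar 0)) (fun _ => b) b l); simpl; auto; try lia. }
  apply degT_fin; [lia|auto|intros M HM A b _; apply Hup; auto|].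
  - exists (fun _ => False). simpl. split; [lia|split].
    + intro b; split; [intro; apply Hup; apply model_self; auto|apply acl_n_acl].
    + intros m Hm Hacl. destruct (proj1 (Hacl Fin.F1)) as [p [k [a [Hb [HA [Hs [l [Hl Hc]]]]]]]].
      * exists n. apply Hup, model_self; auto.
      * assert (length (all_fin n) <= length l); [|rewrite all_fin_length in *; lia].
        refine (orbit_bound (Mfin n) p k a Fin.F1 _ Hb Hs (all_fin_nodup n) _ l Hc).
        intros c _. exists (tswap Fin.F1 c). split; [apply tswap_auto0|split; [|apply tswap_x]].
        intros i Hi'. destruct (HA i Hi').
Qed.

Definition Linf : signature := {| funs := Empty_set; rels := nat;
  fun_ar := fun (f : Empty_set) => match f with end; rel_ar := fun _ => 1 |}.

Definition Minf : structure Linf := @Build_structure Linf {n : nat & Fin.t n}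
  (fun (f : funs Linf) => Empty_set_rect (fun _ => (Fin.t (fun_ar Linf f) -> {n : nat & Fin.t n}) -> {n : nat & Fin.t n}) f)
  (fun (r : rels Linf) args => projT1 (args (Fin.F1 : Fin.t 1)) = r).

Lemma existT_inj_fin n (i j : Fin.t n) : existT Fin.t n i = existT Fin.t n j -> i = j.
Proof. apply inj_pair2_eq_dec. exact Nat.eq_dec. Qed.

Lemma inf_case : degT_is (Th Minf) dInfty.
Proof.
  assert (Hi : inhabited Minf) by (constructor; exact (existT _ 1 Fin.F1)).
  apply degT_inf; auto. exists (fun _ => False).
  destruct (degree_exists Minf (fun _ => False)) as [[m Hm]|Hm]; auto. exfalso.
  destruct Hm as [Hm1 [Hm2 _]].
  set (Lc := map (existT Fin.t (S m)) (all_fin (S m))).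
  assert (Hb : acl Minf (fun _ => False) (existT Fin.t (S m) Fin.F1)).
  { exists (S m). apply (acl_n_intro0 Minf _ (fRel (S m : rels Linf) (fun _ => tvar 0)) (fun _ => existT Fin.t 1 Fin.F1) _ Lc).
    - simpl; intros; lia.
    - simpl. auto.
    - unfold Lc. rewrite length_map, all_fin_length. auto.
    - intros [n' i] Hc. simpl in Hc. subst n'. unfold Lc. apply in_map, all_fin_in. }
  destruct (proj1 (Hm2 _) Hb) as [p [k [a [Hbd [HA [Hs [l [Hl Hc]]]]]]]].
  assert (S m <= length l); [|lia].
  replace (S m) with (length Lc) by (unfold Lc; rewrite length_map, all_fin_length; auto).
  refine (orbit_bound Minf p k a _ Lc Hbd Hs _ _ l Hc).
  - unfold Lc. apply NoDup_map_inj; auto using all_fin_nodup. intros x y _ _; apply existT_inj_fin.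
  - intros c Hin. exists (tswap (existT Fin.t (S m) Fin.F1) c). split; [|split; [|apply tswap_x]].
    + split; [|split].
      * exists (tswap (existT Fin.t (S m) Fin.F1) c); intro; split; apply tswap_invol.
      * intros [].
      * intros r args. simpl. unfold Lc in Hin. apply in_map_iff in Hin. destruct Hin as [j [Hj _]].
        subst c. unfold tswap. repeat destruct excluded_middle_informative; rewrite ?e, ?e0; simpl; tauto.
    + intros i Hi'. destruct (HA i Hi').
Qed.


Inductive RW := rKey | rBlk | rInB | rRig | rOrd | rSL.
Definition arW (r : RW) : nat :=
  match r with rKey => 1 | rBlk => 2 | rInB => 2 | rRig => 2 | rOrd => 3 | rSL => 2 end.
Definition Lw : signature := {| funs := Empty_set; rels := RW;
  fun_ar := fun (f : Empty_set) => match f with end; rel_ar := arW |}.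

Inductive E := EK (n c : nat) (w : nat -> Z) | EP (i d c : nat) (w : nat -> Z).

Definition lvl (x : E) := match x with EK n _ _ => n | EP i d _ _ => i + S d end.
Definition cpy (x : E) := match x with EK _ c _ => c | EP _ _ c _ => c end.
Definition ph (x : E) := match x with EK _ _ w => w | EP _ _ _ w => w end.
Definition idx (x : E) := match x with EK _ _ _ => 0 | EP i _ _ _ => i end.
Definition isK (x : E) : Prop := match x with EK _ _ _ => True | _ => False end.
Definition isP (x : E) : Prop := match x with EP _ _ _ _ => True | _ => False end.

Definition Blk (k x : E) : Prop := isK k /\ isP x /\ lvl k = lvl x /\ cpy k = cpy x /\ ph k = ph x.
Definition InB (t x : E) : Prop := isP x /\ lvl t = lvl x /\ cpy t = cpy x /\ ph t = ph x.
Definition Rig (t y : E) : Prop := (isK y /\ lvl y < lvl t) \/ (isP y /\ lvl y <= lvl t).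
Definition base (m : nat) (y : E) : Z :=
  match y with EK _ _ _ => ph y m | EP _ _ _ _ => if lvl y =? m then Z.of_nat (idx y) else ph y m end.
Definition off (m : nat) (b : Z) (i : nat) : Z := ((Z.of_nat i - b) mod Z.of_nat m)%Z.
Definition Ord (y u v : E) : Prop := isP u /\ isP v /\ lvl u = lvl v /\ cpy u = cpy v /\ ph u = ph v /\
  Rig u y /\ (off (lvl u) (base (lvl u) y) (idx u) < off (lvl u) (base (lvl u) y) (idx v))%Z.
Definition SL (x y : E) : Prop := isK x /\ isK y /\ lvl x = lvl y.

Definition relW (r : RW) : (Fin.t (arW r) -> E) -> Prop :=
  match r as r0 return (Fin.t (arW r0) -> E) -> Prop with
  | rKey => fun a => isK (a Fin.F1)
  | rBlk => fun a => Blk (a Fin.F1) (a (Fin.FS Fin.F1))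
  | rInB => fun a => InB (a Fin.F1) (a (Fin.FS Fin.F1))
  | rRig => fun a => Rig (a Fin.F1) (a (Fin.FS Fin.F1))
  | rOrd => fun a => Ord (a Fin.F1) (a (Fin.FS Fin.F1)) (a (Fin.FS (Fin.FS Fin.F1)))
  | rSL => fun a => SL (a Fin.F1) (a (Fin.FS Fin.F1))
  end.

Definition M0w : structure Lw := @Build_structure Lw E
  (fun (f : funs Lw) => Empty_set_rect (fun _ => (Fin.t (fun_ar Lw f) -> E) -> E) f) relW.

Lemma E_eqP x y : isP x -> isP y -> lvl x = lvl y -> idx x = idx y -> cpy x = cpy y -> ph x = ph y -> x = y.
Proof. destruct x, y; simpl; intros; try contradiction. subst. f_equal; lia. Qed.
Lemma E_eqK x y : isK x -> isK y -> lvl x = lvl y -> cpy x = cpy y -> ph x = ph y -> x = y.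
Proof. destruct x, y; simpl; intros; try contradiction. subst. auto. Qed.
Lemma isK_or_P x : (isK x /\ ~ isP x) \/ (isP x /\ ~ isK x).
Proof. destruct x; simpl; tauto. Qed.
Lemma lvl_P_pos x : isP x -> idx x < lvl x.
Proof. destruct x; simpl; intros; [contradiction|lia]. Qed.

Definition upd (w : nat -> Z) (n : nat) (r : Z) : nat -> Z :=
  fun j => if j =? n then (w j + r)%Z else w j.
Definition shw (n : nat) (r : Z) (m : nat) (w : nat -> Z) : nat -> Z := if m <? n then upd w n r else w.
Definition rotI (n : nat) (r : Z) (i : nat) : nat := Z.to_nat ((Z.of_nat i + r) mod Z.of_nat n).
Definition rho (n : nat) (r : Z) (x : E) : E :=
  match x with
  | EK m c w => EK m c (shw n r m w)
  | EP i d c w => let m := i + S d in let i' := if m =? n then rotI n r i else i in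
                  EP i' (m - S i') c (shw n r m w)
  end.

Lemma rotI_lt n r i : i < n -> rotI n r i < n.
Proof. intro H. unfold rotI. pose proof (Z.mod_pos_bound (Z.of_nat i + r) (Z.of_nat n)). lia. Qed.
Lemma rotI_Z n r i : i < n -> Z.of_nat (rotI n r i) = ((Z.of_nat i + r) mod Z.of_nat n)%Z.
Proof. intro H. unfold rotI. pose proof (Z.mod_pos_bound (Z.of_nat i + r) (Z.of_nat n)). lia. Qed.

Lemma rho_isK n r x : isK (rho n r x) <-> isK x.  Proof. destruct x; simpl; tauto. Qed.
Lemma rho_isP n r x : isP (rho n r x) <-> isP x.  Proof. destruct x; simpl; tauto. Qed.
Lemma rho_lvl n r x : lvl (rho n r x) = lvl x.
Proof. destruct x; simpl; auto. destruct (Nat.eqb_spec (i + S d) n); [|lia].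
  pose proof (rotI_lt n r i). lia. Qed.
Lemma rho_cpy n r x : cpy (rho n r x) = cpy x.  Proof. destruct x; reflexivity. Qed.
Lemma rho_ph n r x : ph (rho n r x) = shw n r (lvl x) (ph x).  Proof. destruct x; reflexivity. Qed.
Lemma rho_idx n r x : isP x -> idx (rho n r x) = if (lvl x =? n) then rotI n r (idx x) else idx x.
Proof. destruct x; simpl; intros; [contradiction|]. destruct (i + S d =? n); auto. Qed.

Lemma shw_inv n r r' m w : (r + r' = 0)%Z -> shw n r' m (shw n r m w) = w.
Proof. intro H. unfold shw. destruct (m <? n); auto. unfold upd. apply functional_extensionality; intro j.
  destruct (j =? n); lia. Qed.
Lemma shw_inj n r m w1 w2 : shw n r m w1 = shw n r m w2 -> w1 = w2.
Proof. unfold shw. destruct (m <? n); auto. intro H. apply functional_extensionality; intro j.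
  apply (f_equal (fun f => f j)) in H. unfold upd in H. destruct (j =? n); lia. Qed.

Lemma rotI_inv n r r' i : (r + r' = 0)%Z -> i < n -> rotI n r' (rotI n r i) = i.
Proof. intros H Hi. unfold rotI at 1. rewrite rotI_Z by auto.
  rewrite Zplus_mod_idemp_l. replace (Z.of_nat i + r + r')%Z with (Z.of_nat i) by lia.
  rewrite Z.mod_small by lia. lia. Qed.

Lemma rho_inv n r r' x : (r + r' = 0)%Z -> rho n r' (rho n r x) = x.
Proof. intro H. destruct (isK_or_P x) as [[Hk _]|[Hp _]].
  - apply E_eqK; auto; rewrite ?rho_isK, ?rho_lvl, ?rho_cpy, ?rho_ph; auto.
    rewrite rho_lvl. apply shw_inv; auto.
  - apply E_eqP; auto; rewrite ?rho_isP, ?rho_lvl, ?rho_cpy, ?rho_ph; auto.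
    + rewrite (rho_idx n r' (rho n r x)) by (apply rho_isP; auto).
      rewrite rho_lvl, rho_idx by auto.
      destruct (Nat.eqb_spec (lvl x) n); auto.
      apply rotI_inv; auto. pose proof (lvl_P_pos x Hp). lia.
    + rewrite rho_lvl. apply shw_inv; auto.
Qed.

Lemma base_K m y : isK y -> base m y = ph y m.
Proof. destruct y; simpl; tauto. Qed.
Lemma base_P m y : isP y -> base m y = if lvl y =? m then Z.of_nat (idx y) else ph y m.
Proof. destruct y; simpl; tauto. Qed.

Lemma base_rho n r m y : (isK y /\ lvl y < m \/ isP y /\ lvl y <= m) -> 0 < m ->
  if m =? n then ((base m (rho n r y)) mod Z.of_nat m = (base m y + r) mod Z.of_nat m)%Z
  else base m (rho n r y) = base m y.
Proof. intros Hr Hm. destruct (isK_or_P y) as [[Hk Hnp]|[Hp Hnk]].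
  - destruct Hr as [[_ Hr]|[Hr _]]; [|contradiction].
    rewrite !base_K by (try apply rho_isK; auto). rewrite rho_ph.
    unfold shw, upd. destruct (Nat.eqb_spec m n), (Nat.ltb_spec (lvl y) n); subst; try lia;
    rewrite ?Nat.eqb_refl; auto.
    destruct (Nat.eqb_spec m n); subst; try lia; auto.
  - destruct Hr as [[Hr _]|[_ Hr]]; [contradiction|].
    rewrite !base_P by (try apply rho_isP; auto). rewrite rho_ph, rho_lvl, rho_idx by auto.
    pose proof (lvl_P_pos y Hp).
    destruct (Nat.eqb_spec (lvl y) n).
    + subst n. unfold shw. rewrite Nat.ltb_irrefl.
      destruct (Nat.eqb_spec (lvl y) m), (Nat.eqb_spec m (lvl y)); try lia;
      subst m; rewrite rotI_Z by lia; rewrite Zmod_mod; auto.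
    + destruct (Nat.eqb_spec (lvl y) m).
      * subst m. destruct (Nat.eqb_spec (lvl y) n); [lia|]. auto.
      * unfold shw, upd. destruct (Nat.eqb_spec m n), (Nat.ltb_spec (lvl y) n); subst; try lia;
        rewrite ?Nat.eqb_refl; auto.
        destruct (Nat.eqb_spec m n); subst; try lia; auto.
Qed.

Lemma off_rho n r u y : isP u -> Rig u y ->
  off (lvl u) (base (lvl u) (rho n r y)) (idx (rho n r u)) = off (lvl u) (base (lvl u) y) (idx u).
Proof. intros Hp Hr. pose proof (lvl_P_pos u Hp) as Hm.
  pose proof (base_rho n r (lvl u) y Hr ltac:(lia)) as Hb.
  rewrite rho_idx by auto. unfold off.
  destruct (Nat.eqb_spec (lvl u) n).
  - subst n. rewrite rotI_Z by lia. rewrite Zminus_mod_idemp_l.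
    rewrite <- (Zminus_mod_idemp_r (Z.of_nat (idx u) + r)), Hb, Zminus_mod_idemp_r.
    f_equal. lia.
  - rewrite Hb. auto.
Qed.

Lemma rho_Blk n r k x : Blk (rho n r k) (rho n r x) <-> Blk k x.
Proof. unfold Blk. rewrite !rho_isK, !rho_isP, !rho_lvl, !rho_cpy, !rho_ph.
  split; intros (H1 & H2 & H3 & H4 & H5); repeat split; auto.
  - rewrite H3 in H5. eapply shw_inj; eauto.
  - rewrite H3, H5; auto. Qed.

Lemma rho_InB n r k x : InB (rho n r k) (rho n r x) <-> InB k x.
Proof. unfold InB. rewrite !rho_isP, !rho_lvl, !rho_cpy, !rho_ph.
  split; intros (H2 & H3 & H4 & H5); repeat split; auto.
  - rewrite H3 in H5. eapply shw_inj; eauto.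
  - rewrite H3, H5; auto. Qed.

Lemma rho_Rig n r k x : Rig (rho n r k) (rho n r x) <-> Rig k x.
Proof. unfold Rig. rewrite !rho_isK, !rho_isP, !rho_lvl. tauto. Qed.

Lemma rho_SL n r k x : SL (rho n r k) (rho n r x) <-> SL k x.
Proof. unfold SL. rewrite !rho_isK, !rho_lvl. tauto. Qed.

Lemma rho_Ord n r y u v : Ord (rho n r y) (rho n r u) (rho n r v) <-> Ord y u v.
Proof. unfold Ord. rewrite !rho_isP, !rho_lvl, !rho_cpy, !rho_ph, rho_Rig.
  split; intros (H1 & H2 & H3 & H4 & H5 & H6 & H7).
  - assert (H5' : ph u = ph v) by (rewrite H3 in H5; eapply shw_inj; eauto).
    rewrite off_rho in H7 by auto. rewrite H3 in H7 at 3. rewrite H3 in H7 at 3.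
    rewrite (off_rho n r v y) in H7 by (auto; unfold Rig in *; rewrite <- H3; auto).
    repeat split; auto. rewrite H3 at 3. rewrite H3 at 3. auto.
  - repeat split; auto. rewrite H3, H5; auto.
    rewrite off_rho by auto. rewrite H3 at 3. rewrite H3 at 3.
    rewrite (off_rho n r v y) by (auto; unfold Rig in *; rewrite <- H3; auto).
    rewrite <- H3 at 1. rewrite <- H3 at 1. auto.
Qed.

Lemma auto_W (s : E -> E) : (exists t : E -> E, forall x, s (t x) = x /\ t (s x) = x) ->
  (forall x, isK (s x) <-> isK x) ->
  (forall k x, Blk (s k) (s x) <-> Blk k x) ->
  (forall k x, InB (s k) (s x) <-> InB k x) ->
  (forall k x, Rig (s k) (s x) <-> Rig k x) ->
  (forall y u v, Ord (s y) (s u) (s v) <-> Ord y u v) ->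
  (forall k x, SL (s k) (s x) <-> SL k x) -> is_auto M0w s.
Proof. intros Hinv H1 H2 H3 H4 H5 H6. split; [auto|split].
  - intros f. destruct f.
  - intros r args. destruct r; simpl; auto. Qed.

Lemma rho_auto n r : is_auto M0w (rho n r).
Proof. apply auto_W.
  - exists (rho n (- r)). intro x; split; apply rho_inv; lia.
  - apply rho_isK.
  - apply rho_Blk.
  - apply rho_InB.
  - apply rho_Rig.
  - apply rho_Ord.
  - apply rho_SL.
Qed.

Definition swapn (c0 c1 c : nat) := if c =? c0 then c1 else if c =? c1 then c0 else c.
Definition setc (x : E) (c : nat) := match x with EK n _ w => EK n c w | EP i d _ w => EP i d c w end.
Definition tau (n0 : nat) (w0 : nat -> Z) (c0 c1 : nat) (x : E) : E :=
  if excluded_middle_informative (lvl x = n0 /\ ph x = w0) then setc x (swapn c0 c1 (cpy x)) else x.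

Section Tau.
Variables (n0 : nat) (w0 : nat -> Z) (c0 c1 : nat).
Let t := tau n0 w0 c0 c1.

Lemma tau_isK x : isK (t x) <-> isK x.
Proof. unfold t, tau. destruct excluded_middle_informative; destruct x; simpl; tauto. Qed.
Lemma tau_isP x : isP (t x) <-> isP x.
Proof. unfold t, tau. destruct excluded_middle_informative; destruct x; simpl; tauto. Qed.
Lemma tau_lvl x : lvl (t x) = lvl x.
Proof. unfold t, tau. destruct excluded_middle_informative; destruct x; simpl; auto. Qed.
Lemma tau_ph x : ph (t x) = ph x.
Proof. unfold t, tau. destruct excluded_middle_informative; destruct x; simpl; auto. Qed.
Lemma tau_idx x : idx (t x) = idx x.
Proof. unfold t, tau. destruct excluded_middle_informative; destruct x; simpl; auto. Qed.
Lemma swapn_invol c : swapn c0 c1 (swapn c0 c1 c) = c.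
Proof. unfold swapn. repeat (destruct Nat.eqb eqn:?; rewrite ?Nat.eqb_eq, ?Nat.eqb_neq in *; subst; try lia; auto).
Qed.
Lemma swapn_inj c c' : swapn c0 c1 c = swapn c0 c1 c' -> c = c'.
Proof. intro H. rewrite <- (swapn_invol c), <- (swapn_invol c'), H. auto. Qed.
Lemma tau_cpy_eq x y : lvl x = lvl y -> ph x = ph y -> (cpy (t x) = cpy (t y) <-> cpy x = cpy y).
Proof. intros Hl Hp. unfold t, tau. rewrite Hl, Hp.
  destruct excluded_middle_informative; destruct x, y; simpl; split; intro H; subst; auto;
  eapply swapn_inj; eauto. Qed.
Lemma tau_invol x : t (t x) = x.
Proof. unfold t at 1. unfold tau at 1. rewrite tau_lvl, tau_ph.
  destruct excluded_middle_informative as [H|H].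
  - unfold t, tau. destruct excluded_middle_informative; [|contradiction].
    destruct x; simpl; rewrite swapn_invol; auto.
  - unfold t, tau. destruct excluded_middle_informative; [contradiction|auto].
Qed.
Lemma tau_base m y : base m (t y) = base m y.
Proof. destruct (isK_or_P y) as [[Hk _]|[Hp _]].
  - rewrite !base_K; auto. rewrite tau_ph; auto. apply tau_isK; auto.
  - rewrite !base_P; auto. rewrite tau_ph, tau_lvl, tau_idx; auto. apply tau_isP; auto. Qed.

Lemma tau_auto : is_auto M0w t.
Proof. apply auto_W.
  - exists t. intro; split; apply tau_invol.
  - apply tau_isK.
  - intros k x. unfold Blk. rewrite !tau_isK, !tau_isP, !tau_lvl, !tau_ph.
    split; intros (H1 & H2 & H3 & H4 & H5); repeat split; auto;
    [rewrite <- (tau_cpy_eq k x)|rewrite (tau_cpy_eq k x)]; auto.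
  - intros k x. unfold InB. rewrite !tau_isP, !tau_lvl, !tau_ph.
    split; intros (H2 & H3 & H4 & H5); repeat split; auto;
    [rewrite <- (tau_cpy_eq k x)|rewrite (tau_cpy_eq k x)]; auto.
  - intros k x. unfold Rig. rewrite !tau_isK, !tau_isP, !tau_lvl. tauto.
  - intros y u v. unfold Ord, Rig. rewrite !tau_isK, !tau_isP, !tau_lvl, !tau_ph, !tau_idx, !tau_base.
    split; intros (H1 & H2 & H3 & H4 & H5 & H6 & H7); repeat split; auto;
    [rewrite <- (tau_cpy_eq u v)|rewrite (tau_cpy_eq u v)]; auto.
  - intros k x. unfold SL. rewrite !tau_isK, !tau_lvl. tauto.
Qed.

Lemma tau_fix x : ~ (lvl x = n0 /\ ph x = w0 /\ (cpy x = c0 \/ cpy x = c1)) -> t x = x.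
Proof. intro H. unfold t, tau. destruct excluded_middle_informative as [[Hl Hp]|]; auto.
  unfold swapn. destruct (Nat.eqb_spec (cpy x) c0); [exfalso; apply H; auto|].
  destruct (Nat.eqb_spec (cpy x) c1); [exfalso; apply H; auto|]. destruct x; auto. Qed.

Lemma tau_cpy_c0 x : lvl x = n0 -> ph x = w0 -> cpy x = c0 -> cpy (t x) = c1.
Proof. intros Hl Hp Hc. unfold t, tau. destruct excluded_middle_informative; [|tauto].
  unfold swapn. rewrite Hc, Nat.eqb_refl. destruct x; auto. Qed.
End Tau.


Definition ev1 {X} (a : X) : Fin.t 1 -> X := fun _ => a.
Definition ev2 {X} (a b : X) : Fin.t 2 -> X := fun i => match proj1_sig (Fin.to_nat i) with 0 => a | _ => b end.
Definition ev3 {X} (a b c : X) : Fin.t 3 -> X :=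
  fun i => match proj1_sig (Fin.to_nat i) with 0 => a | 1 => b | _ => c end.

Definition aKey (x : nat) : formula Lw := @fRel Lw rKey (ev1 (tvar x)).
Definition aBlk (x y : nat) : formula Lw := @fRel Lw rBlk (ev2 (tvar x) (tvar y)).
Definition aInB (x y : nat) : formula Lw := @fRel Lw rInB (ev2 (tvar x) (tvar y)).
Definition aRig (x y : nat) : formula Lw := @fRel Lw rRig (ev2 (tvar x) (tvar y)).
Definition aSL (x y : nat) : formula Lw := @fRel Lw rSL (ev2 (tvar x) (tvar y)).
Definition aOrd (x y z : nat) : formula Lw := @fRel Lw rOrd (ev3 (tvar x) (tvar y) (tvar z)).

Section Sem.
Variable M : structure Lw.
Definition RKey (a : M) := @rel_int Lw M rKey (ev1 a).
Definition RBlk (a b : M) := @rel_int Lw M rBlk (ev2 a b).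
Definition RInB (a b : M) := @rel_int Lw M rInB (ev2 a b).
Definition RRig (a b : M) := @rel_int Lw M rRig (ev2 a b).
Definition RSL (a b : M) := @rel_int Lw M rSL (ev2 a b).
Definition ROrd (a b c : M) := @rel_int Lw M rOrd (ev3 a b c).

Lemma ev2_eval e x y : (fun i => eval M e (ev2 (tvar x) (tvar y) i)) = ev2 (e x) (e y).
Proof. apply functional_extensionality; intro i. unfold ev2. destruct (proj1_sig (Fin.to_nat i)); reflexivity. Qed.
Lemma ev3_eval e x y z : (fun i => eval M e (ev3 (tvar x) (tvar y) (tvar z) i)) = ev3 (e x) (e y) (e z).
Proof. apply functional_extensionality; intro i. unfold ev3. destruct (proj1_sig (Fin.to_nat i)) as [|[|]]; reflexivity. Qed.

Lemma sat_aKey e x : sat M e (aKey x) <-> RKey (e x).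
Proof. unfold aKey, RKey. simpl. unfold ev1. tauto. Qed.
Lemma sat_aBlk e x y : sat M e (aBlk x y) <-> RBlk (e x) (e y).
Proof. unfold aBlk, RBlk. simpl. rewrite ev2_eval. tauto. Qed.
Lemma sat_aInB e x y : sat M e (aInB x y) <-> RInB (e x) (e y).
Proof. unfold aInB, RInB. simpl. rewrite ev2_eval. tauto. Qed.
Lemma sat_aRig e x y : sat M e (aRig x y) <-> RRig (e x) (e y).
Proof. unfold aRig, RRig. simpl. rewrite ev2_eval. tauto. Qed.
Lemma sat_aSL e x y : sat M e (aSL x y) <-> RSL (e x) (e y).
Proof. unfold aSL, RSL. simpl. rewrite ev2_eval. tauto. Qed.
Lemma sat_aOrd e x y z : sat M e (aOrd x y z) <-> ROrd (e x) (e y) (e z).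
Proof. unfold aOrd, ROrd. simpl. rewrite ev3_eval. tauto. Qed.
End Sem.

Lemma RKey0 a : RKey M0w a <-> isK a. Proof. reflexivity. Qed.
Lemma RBlk0 a b : RBlk M0w a b <-> Blk a b. Proof. reflexivity. Qed.
Lemma RInB0 a b : RInB M0w a b <-> InB a b. Proof. reflexivity. Qed.
Lemma RRig0 a b : RRig M0w a b <-> Rig a b. Proof. reflexivity. Qed.
Lemma RSL0 a b : RSL M0w a b <-> SL a b. Proof. reflexivity. Qed.
Lemma ROrd0 a b c : ROrd M0w a b c <-> Ord a b c. Proof. reflexivity. Qed.

Definition cterm (j : nat) : formula Lw :=
  fOr (fEq (tvar 0) (tvar (S j))) (fOr (aBlk (S j) 0) (fOr (aBlk 0 (S j))
    (fEx (fAnd (aBlk 0 (S (S j))) (aBlk 0 1))))).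
Fixpoint Cf (kk : nat) : formula Lw := match kk with 0 => fFalse | S j => fOr (Cf j) (cterm j) end.
Definition CR (M : structure Lw) (x y : M) : Prop :=
  x = y \/ RBlk M y x \/ RBlk M x y \/ exists z, RBlk M z y /\ RBlk M z x.

Lemma sat_Cf M : forall kk e, sat M e (Cf kk) <-> exists j, j < kk /\ CR M (e 0) (e (S j)).
Proof. induction kk; intros e; cbn [Cf].
  - simpl. split; [tauto|]. intros [j [Hj _]]; lia.
  - rewrite sat_or, IHkk. unfold cterm. rewrite !sat_or, sat_ex, !sat_aBlk.
    setoid_rewrite sat_and. setoid_rewrite sat_aBlk. simpl. unfold CR. split.
    + intros [[j [Hj H]]|H]; [exists j; split; [lia|auto]|exists kk; split; [lia|]]. tauto.
    + intros [j [Hj H]]. destruct (Nat.eq_dec j kk); [subst; right; tauto|left; exists j; split; [lia|auto]].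
Qed.

Fixpoint NRf (kk h : nat) : formula Lw :=
  match kk with 0 => fImp fFalse fFalse | S j => fAnd (NRf j h) (fNot (aRig (S h) (S j))) end.
Lemma sat_NRf M : forall kk h e, sat M e (NRf kk h) <-> forall j, j < kk -> ~ RRig M (e (S h)) (e (S j)).
Proof. induction kk; intros h e; cbn [NRf].
  - simpl. split; auto. intros; lia.
  - rewrite sat_and, IHkk, sat_not, sat_aRig. split.
    + intros [H1 H2] j Hj. destruct (Nat.eq_dec j kk); [subst; auto|apply H1; lia].
    + intros H; split; auto.
Qed.

Definition F1f (phi : formula Lw) (kk m : nat) : formula Lw :=
  fImp phi (fImp (fNot (Cf kk)) (fNot (frename S (AM m phi)))).
Lemma sat_F1f M phi kk m e : sat M e (F1f phi kk m) <->
  (sat M e phi -> ~ (exists j, j < kk /\ CR M (e 0) (e (S j))) ->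
   ~ (exists l, length l = m /\ forall z, sat M (scons z (fun n => e (S n))) phi -> In z l)).
Proof. unfold F1f, fNot. cbn [sat]. rewrite sat_Cf, sat_rename, sat_AM. tauto. Qed.

Definition up2 : nat -> nat := fun n => match n with 0 => 0 | S j => S (S j) end.
Definition F2f (phi : formula Lw) (kk h : nat) : formula Lw :=
  fImp (aKey (S h)) (fImp (NRf kk h) (fImp (aBlk (S h) 0) (fImp phi
    (fAll (fImp (aBlk (S (S h)) 0) (frename up2 phi)))))).
Lemma sat_F2f M phi kk h e : sat M e (F2f phi kk h) <->
  (RKey M (e (S h)) -> (forall j, j < kk -> ~ RRig M (e (S h)) (e (S j))) -> RBlk M (e (S h)) (e 0) ->
   sat M e phi -> forall u, RBlk M (e (S h)) u -> sat M (scons u (fun n => e (S n))) phi).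
Proof. unfold F2f. cbn [sat]. rewrite sat_aKey, sat_NRf, sat_aBlk.
  setoid_rewrite sat_aBlk. setoid_rewrite sat_rename.
  assert (Heq : forall u : M, (fun n => scons u e (up2 n)) = scons u (fun n => e (S n))).
  { intro u; apply functional_extensionality; intros [|n]; reflexivity. }
  split; intros H H1 H2 H3 H4 u Hu; [rewrite <- Heq; apply H; auto | rewrite Heq; apply H; auto].
Qed.

Definition envl {X} (l : list X) (d : X) : nat -> X := fun n => nth n l d.


Definition blockL (x : E) : list E := map (fun i => EP i (lvl x - S i) (cpy x) (ph x)) (seq 0 (lvl x)).

Lemma blockL_length x : length (blockL x) = lvl x.
Proof. unfold blockL. rewrite length_map, length_seq. auto. Qed.
Lemma blockL_nodup x : NoDup (blockL x).
Proof. unfold blockL. apply NoDup_map_inj; [|apply seq_NoDup]. intros i j _ _ H. inversion H; auto. Qed.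
Lemma Blk_blockL k z : Blk k z -> In z (blockL k).
Proof. intros (Hk & Hz & H1 & H2 & H3). destruct z as [|i d c w]; [contradiction|].
  simpl in H1, H2, H3. unfold blockL. rewrite H1, H2, H3.
  apply in_map_iff. exists i. split; [f_equal; lia|apply in_seq; lia]. Qed.
Lemma blockL_Blk k z : isK k -> In z (blockL k) -> Blk k z.
Proof. intros Hk Hin. unfold blockL in Hin. apply in_map_iff in Hin. destruct Hin as [i [Hi Hin]].
  apply in_seq in Hin. subst z. unfold Blk; simpl. repeat split; auto. lia. Qed.

Lemma rho_fix n r y : (isK y /\ n <= lvl y) \/ (isP y /\ n < lvl y) -> rho n r y = y.
Proof. intros H. destruct (isK_or_P y) as [[Hk _]|[Hp _]].
  - destruct H as [[_ H]|[H _]]; [|destruct y; simpl in *; tauto].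
    apply E_eqK; auto; rewrite ?rho_isK, ?rho_lvl, ?rho_cpy, ?rho_ph; auto.
    unfold shw. destruct (Nat.ltb_spec (lvl y) n); auto; lia.
  - destruct H as [[H _]|[_ H]]; [destruct y; simpl in *; tauto|].
    apply E_eqP; auto; rewrite ?rho_isP, ?rho_lvl, ?rho_cpy, ?rho_ph, ?rho_idx; auto.
    + destruct (Nat.eqb_spec (lvl y) n); auto; lia.
    + unfold shw. destruct (Nat.ltb_spec (lvl y) n); auto; lia.
Qed.

Lemma rho_move t x u : Blk t x -> Blk t u ->
  rho (lvl t) (Z.of_nat (idx u) - Z.of_nat (idx x)) x = u.
Proof. intros (Hk & Hx & H1 & H2 & H3) (_ & Hu & H1' & H2' & H3').
  pose proof (lvl_P_pos x Hx). pose proof (lvl_P_pos u Hu).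
  apply E_eqP; auto; rewrite ?rho_isP, ?rho_lvl, ?rho_cpy, ?rho_ph, ?rho_idx; auto; try congruence.
  - rewrite <- H1, Nat.eqb_refl. unfold rotI.
    replace (Z.of_nat (idx x) + (Z.of_nat (idx u) - Z.of_nat (idx x)))%Z with (Z.of_nat (idx u)) by lia.
    rewrite Z.mod_small by lia. lia.
  - rewrite <- H1. unfold shw. rewrite Nat.ltb_irrefl. congruence.
Qed.

Definition T3f : formula Lw := fImp (aBlk 0 2) (fImp (aBlk 1 2) (fEq (tvar 0) (tvar 1))).
Definition T4f : formula Lw := fImp (aBlk 0 1) (aKey 0).
Definition T5f : formula Lw := fImp (aBlk 0 1) (aInB 0 1).
Definition T6f : formula Lw := fImp (aInB 0 1) (fImp (aInB 0 2) (fImp (aRig 0 3)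
  (fImp (fNot (fEq (tvar 1) (tvar 2))) (fOr (aOrd 3 1 2) (aOrd 3 2 1))))).
Definition T7f : formula Lw := fNot (aOrd 0 1 1).
Definition T8f : formula Lw := fImp (aOrd 0 1 2) (fImp (aOrd 0 2 3) (aOrd 0 1 3)).
Definition T9f : formula Lw := fImp (aKey 0) (fImp (aKey 1) (fImp (fNot (aRig 0 1))
  (fImp (fNot (aRig 1 0)) (aSL 0 1)))).
Definition T10f (s : nat) : formula Lw := fImp (aSL 0 1) (fImp (AM s (aBlk 1 0)) (AM s (aBlk 2 0))).
Definition T11f : formula Lw := fImp (aBlk 0 1) (fImp (aBlk 0 2) (aInB 1 2)).
Definition T12f : formula Lw := fImp (aBlk 0 1) (aRig 1 1).

Ltac semW := unfold fNot in *; cbn [sat] in *;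
  rewrite ?sat_aKey, ?sat_aBlk, ?sat_aInB, ?sat_aRig, ?sat_aSL, ?sat_aOrd, ?sat_or, ?sat_not in *;
  rewrite ?RKey0, ?RBlk0, ?RInB0, ?RRig0, ?RSL0, ?ROrd0 in *.

Lemma V3 e : sat M0w e T3f.
Proof. unfold T3f. semW. intros (H1 & H2 & H3 & H4 & H5) (H1' & _ & H3' & H4' & H5').
  simpl. apply E_eqK; auto; congruence. Qed.
Lemma V4 e : sat M0w e T4f.
Proof. unfold T4f. semW. intros (H1 & _). auto. Qed.
Lemma V5 e : sat M0w e T5f.
Proof. unfold T5f. semW. intros (H1 & H2 & H3 & H4 & H5). repeat split; auto. Qed.

Lemma off_inj m b i j : i < m -> j < m -> off m b i = off m b j -> i = j.
Proof. intros Hi Hj H. unfold off in H.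
  assert (Hd : ((Z.of_nat i - Z.of_nat j) mod Z.of_nat m = 0)%Z).
  { replace (Z.of_nat i - Z.of_nat j)%Z with ((Z.of_nat i - b) - (Z.of_nat j - b))%Z by lia.
    rewrite Zminus_mod, H, Z.sub_diag. apply Z.mod_0_l. lia. }
  apply Z.mod_divide in Hd; [|lia]. destruct Hd as [q Hq].
  destruct (Z.lt_trichotomy q 0) as [Hq0|[Hq0|Hq0]]; [nia|subst; lia|nia]. Qed.

Lemma V6 e : sat M0w e T6f.
Proof. unfold T6f. semW. intros (Hu & Hu1 & Hu2 & Hu3) (Hv & Hv1 & Hv2 & Hv3) Hr Hne.
  simpl in *. set (t := e 0) in *. set (u := e 1) in *. set (v := e 2) in *. set (y := e 3) in *.
  assert (Hr' : Rig u y) by (unfold Rig in *; rewrite <- Hu1; auto).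
  assert (idx u <> idx v).
  { intro Hi. apply Hne. apply E_eqP; auto; congruence. }
  pose proof (lvl_P_pos u Hu). pose proof (lvl_P_pos v Hv).
  assert (off (lvl u) (base (lvl u) y) (idx u) <> off (lvl u) (base (lvl u) y) (idx v)).
  { intro Ho. apply off_inj in Ho; auto; lia. }
  unfold Ord. destruct (Z.lt_total (off (lvl u) (base (lvl u) y) (idx u)) (off (lvl u) (base (lvl u) y) (idx v)))
    as [Hlt|[Heq|Hgt]]; [left|contradiction|right].
  - repeat split; auto; congruence.
  - assert (Hr'' : Rig v y) by (unfold Rig in *; rewrite <- Hv1; auto).
    repeat split; auto; try congruence; try (rewrite <- Hu1, Hv1 in *; auto).
Qed.

Lemma V7 e : sat M0w e T7f.
Proof. unfold T7f. semW. unfold Ord. intros (_ & _ & _ & _ & _ & _ & H). lia. Qed.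
Lemma V8 e : sat M0w e T8f.
Proof. unfold T8f. semW. unfold Ord.
  intros (H1 & H2 & H3 & H4 & H5 & H6 & H7) (H1' & H2' & H3' & H4' & H5' & H6' & H7').
  repeat split; auto; try congruence. rewrite <- H3 in H7'. lia. Qed.
Lemma V9 e : sat M0w e T9f.
Proof. unfold T9f. semW. unfold Rig, SL. intros Hk1 Hk2 Hn1 Hn2. repeat split; auto.
  destruct (Nat.lt_total (lvl (e 0)) (lvl (e 1))) as [H|[H|H]]; auto; exfalso; tauto. Qed.

Lemma V10 s e : sat M0w e (T10f s).
Proof. unfold T10f. semW. rewrite !sat_AM. intros (Hk1 & Hk2 & Hl) [l [Hl' Hc]].
  assert (Hc' : forall z, Blk (e 0) z -> In z l).
  { intros z Hz. apply Hc. semW; try exact Hz. }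
  assert (lvl (e 0) <= s).
  { rewrite <- Hl', <- blockL_length. apply NoDup_incl_length; [apply blockL_nodup|].
    intros z Hz. apply Hc'. apply blockL_Blk; auto. }
  assert (Hlen : length (blockL (e 1)) <= s) by (rewrite blockL_length; lia).
  destruct (pad_list (e 0) (fun z => Blk (e 1) z) (blockL (e 1)) s Hlen (Blk_blockL (e 1))) as [l' [H1 H2]].
  exists l'. split; [auto|]. intros z Hz. apply H2. semW; try exact Hz.
Qed.

Lemma V11 e : sat M0w e T11f.
Proof. unfold T11f. semW. intros (H1 & H2 & H3 & H4 & H5) (H1' & H2' & H3' & H4' & H5').
  repeat split; auto; congruence. Qed.
Lemma V12 e : sat M0w e T12f.
Proof. unfold T12f. semW. intros (H1 & H2 & _). unfold Rig. right. split; auto. Qed.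

Lemma same_CR x y : lvl x = lvl y -> cpy x = cpy y -> ph x = ph y -> CR M0w x y.
Proof. intros H1 H2 H3. unfold CR. rewrite !RBlk0.
  destruct (isK_or_P x) as [[Hx _]|[Hx _]], (isK_or_P y) as [[Hy _]|[Hy _]].
  - left. apply E_eqK; auto.
  - right; right; left. repeat split; auto.
  - right; left. repeat split; auto.
  - right; right; right. exists (EK (lvl x) (cpy x) (ph x)). rewrite !RBlk0. unfold Blk; simpl.
    repeat split; auto.
Qed.

Lemma V1 phi kk m e : bound (S kk) phi -> sat M0w e (F1f phi kk m).
Proof. intros Hb. rewrite sat_F1f. intros Hs HC [l [Hl Hc]].
  set (b := e 0) in *. set (a := fun n => e (S n)) in *.
  assert (He : e = scons b a) by (apply functional_extensionality; intros [|n]; reflexivity).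
  rewrite He in Hs.
  set (cm := list_max (cpy b :: map (fun j => cpy (a j)) (seq 0 kk))).
  assert (Hcm : forall j, j < kk -> cpy (a j) <= cm).
  { intros j Hj. pose proof (proj1 (list_max_le (cpy b :: map (fun j => cpy (a j)) (seq 0 kk)) cm) (le_n _)) as HF.
    rewrite Forall_forall in HF. apply HF. right. apply in_map_iff. exists j; split; [reflexivity|apply in_seq; lia]. }
  assert (Hcb : cpy b <= cm).
  { pose proof (proj1 (list_max_le (cpy b :: map (fun j => cpy (a j)) (seq 0 kk)) cm) (le_n _)) as HF.
    rewrite Forall_forall in HF. apply HF. left; auto. }
  set (Lc := map (fun t => tau (lvl b) (ph b) (cpy b) (S cm + t) b) (seq 0 (S m))).
  assert (length Lc <= length l); [|unfold Lc in *; rewrite length_map, length_seq in *; lia].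
  apply (orbit_bound M0w phi kk a b Lc Hb Hs).
  - unfold Lc. apply NoDup_map_inj; [|apply seq_NoDup]. intros t1 t2 _ _ Ht.
    apply (f_equal cpy) in Ht. rewrite !tau_cpy_c0 in Ht; auto. lia.
  - intros c Hin. unfold Lc in Hin. apply in_map_iff in Hin. destruct Hin as [t [Ht _]].
    exists (tau (lvl b) (ph b) (cpy b) (S cm + t)). split; [apply tau_auto|split; auto].
    intros j Hj. apply tau_fix. intros (H1 & H2 & H3).
    destruct H3 as [H3|H3].
    + apply HC. exists j. split; auto. apply same_CR; auto.
    + pose proof (Hcm j Hj). lia.
  - exact Hc.
Qed.

Lemma V2 phi kk h e : bound (S kk) phi -> sat M0w e (F2f phi kk h).
Proof. intros Hb. rewrite sat_F2f. rewrite !RKey0, !RBlk0.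
  intros Hk HNR HB Hs u Hu. setoid_rewrite RRig0 in HNR.
  set (a := fun n => e (S n)) in *.
  assert (He : e = scons (e 0) a) by (apply functional_extensionality; intros [|n]; reflexivity).
  rewrite He in Hs. rewrite <- (rho_move (e (S h)) (e 0) u HB Hu).
  apply (auto_moves M0w _ phi kk a (e 0) (rho_auto _ _) Hb); auto.
  intros j Hj. apply rho_fix. specialize (HNR j Hj). unfold Rig in HNR.
  destruct (isK_or_P (a j)) as [[Hk' _]|[Hp' _]]; [left|right]; split; auto.
  - apply Nat.nlt_ge. intro. apply HNR. left. auto.
  - apply Nat.nle_gt. intro. apply HNR. right. auto.
Qed.

Lemma low_bound N : exists (A : M0w -> Prop) b, acl M0w A b /\ ~ acl_n M0w A N b.
Proof.
  set (k := EK (S N) 0 (fun _ => 0%Z)). exists (fun y => y = k), (EP 0 N 0 (fun _ => 0%Z)).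
  assert (HB : Blk k (EP 0 N 0 (fun _ => 0%Z))) by (unfold Blk; simpl; repeat split; auto).
  split.
  - exists (S N). apply (acl_n_intro M0w _ (aBlk 1 0) (fun _ => k) _ (blockL k)); auto.
    + rewrite blockL_length. simpl; lia.
    + intros c Hc. semW. apply Blk_blockL. exact Hc.
  - intros [p [kk [a [Hb [HA [Hs [l [Hl Hc]]]]]]]].
    assert (length (blockL k) <= length l); [|rewrite blockL_length in *; simpl in *; lia].
    apply (orbit_bound M0w p kk a _ (blockL k) Hb Hs (blockL_nodup k)); auto.
    intros c Hin. apply blockL_Blk in Hin; [|simpl; auto].
    exists (rho (lvl k) (Z.of_nat (idx c) - Z.of_nat (idx (EP 0 N 0 (fun _ => 0%Z))))).
    split; [apply rho_auto|split; [|apply rho_move; auto]].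
    intros i Hi. rewrite (HA i Hi). apply rho_fix. left. simpl; split; auto.
Qed.


Lemma exists_max {X} (R : X -> X -> Prop) : forall l (P : X -> Prop), (forall c, P c -> In c l) -> (exists b, P b) ->
  (forall u, P u -> ~ R u u) -> (forall u v w, P u -> P v -> P w -> R u v -> R v w -> R u w) ->
  exists mx, P mx /\ forall z, P z -> ~ R mx z.
Proof. induction l as [|a l IH]; intros P Hc Hne Hirr Htr.
  - destruct Hne as [b Hb]. destruct (Hc b Hb).
  - destruct (classic (exists b, P b /\ b <> a)) as [Hne'|Hne'].
    + destruct (IH (fun c => P c /\ c <> a)) as [mx [[Hmx1 Hmx2] Hmx3]]; auto.
      * intros c [Hc1 Hc2]. destruct (Hc c Hc1); [congruence|auto].
      * intros u [Hu _]; auto.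
      * intros u v w [Hu _] [Hv _] [Hw _]; eauto.
      * destruct (classic (P a /\ R mx a)) as [[Ha Hra]|Hna].
        -- exists a. split; auto. intros z Hz Haz.
           destruct (classic (z = a)) as [->|Hza]; [exact (Hirr a Ha Haz)|].
           apply (Hmx3 z); [split; auto|apply (Htr mx a z); auto].
        -- exists mx. split; auto. intros z Hz Hmz.
           destruct (classic (z = a)) as [->|Hza]; [tauto|]. apply (Hmx3 z); [split; auto|auto].
    + exists a. destruct Hne as [b Hb].
      assert (b = a) by (apply NNPP; intro; apply Hne'; eauto). subst b.
      split; auto. intros z Hz. assert (z = a) by (apply NNPP; intro; apply Hne'; eauto). subst; auto.
Qed.

Section Definable.
Context {L : signature} (M : structure L) (O : formula L).

Definition xi_z : nat -> nat := fun n => match n with 0 => 0 | S j => S (S j) end.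
Definition xi_xz : nat -> nat := fun n => match n with 0 => 1 | 1 => 0 | S (S j) => S (S j) end.
Definition maxf (chi : formula L) := fAnd chi (fAll (fImp (frename xi_z chi) (fNot (frename xi_xz O)))).
Definition nmaxf (chi : formula L) := fEx (fAnd (frename xi_z chi) (frename xi_xz O)).

Lemma env_z (x z : M) e : (fun n => scons z (scons x e) (xi_z n)) = scons z e.
Proof. apply functional_extensionality; intros [|n]; reflexivity. Qed.
Lemma env_xz (x z : M) e : (fun n => scons z (scons x e) (xi_xz n)) = scons x (scons z e).
Proof. apply functional_extensionality; intros [|[|n]]; reflexivity. Qed.

Lemma sat_maxf chi x e : sat M (scons x e) (maxf chi) <->
  sat M (scons x e) chi /\ forall z, sat M (scons z e) chi -> ~ sat M (scons x (scons z e)) O.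
Proof. unfold maxf. rewrite sat_and. cbn [sat]. unfold fNot. cbn [sat].
  split; intros [H1 H2]; split; auto; intros z Hz; specialize (H2 z);
  rewrite !sat_rename, env_z, env_xz in *; auto. apply H2; auto. Qed.

Lemma sat_nmaxf chi x e : sat M (scons x e) (nmaxf chi) <->
  exists z, sat M (scons z e) chi /\ sat M (scons x (scons z e)) O.
Proof. unfold nmaxf. rewrite sat_ex. setoid_rewrite sat_and. setoid_rewrite sat_rename.
  split; intros [z Hz]; exists z; rewrite ?env_z, ?env_xz in *; auto. Qed.

Lemma definable_order : forall n chi e (l : list M), length l <= n ->
  (forall c, sat M (scons c e) chi -> In c l) ->
  (forall u, sat M (scons u e) chi -> ~ sat M (scons u (scons u e)) O) ->
  (forall u v w, sat M (scons u e) chi -> sat M (scons v e) chi -> sat M (scons w e) chi ->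
     sat M (scons u (scons v e)) O -> sat M (scons v (scons w e)) O -> sat M (scons u (scons w e)) O) ->
  (forall u v, sat M (scons u e) chi -> sat M (scons v e) chi -> u <> v ->
     sat M (scons u (scons v e)) O \/ sat M (scons v (scons u e)) O) ->
  forall b, sat M (scons b e) chi ->
  exists psi, sat M (scons b e) psi /\ forall c, sat M (scons c e) psi -> c = b.
Proof.
  induction n; intros chi e l Hl Hc Hirr Htr Htot b Hb.
  - destruct l; [destruct (Hc b Hb)|simpl in Hl; lia].
  - set (P := fun c => sat M (scons c e) chi).
    set (R := fun u v => sat M (scons u (scons v e)) O).
    destruct (exists_max R l P Hc (ex_intro _ b Hb) Hirr Htr) as [mx [Hmx1 Hmx2]].
    destruct (classic (b = mx)) as [->|Hbm].
    + exists (maxf chi). rewrite sat_maxf. split; [split; auto|].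
      intros c Hc'. rewrite sat_maxf in Hc'. destruct Hc' as [Hc1 Hc2].
      apply NNPP; intro Hne. destruct (Htot c mx Hc1 Hmx1 Hne) as [H|H].
      * exact (Hc2 mx Hmx1 H).
      * exact (Hmx2 c Hc1 H).
    + set (chi' := fAnd chi (nmaxf chi)).
      assert (Hs' : forall c, sat M (scons c e) chi' <-> P c /\ exists z, P z /\ R c z).
      { intro c. unfold chi'. rewrite sat_and, sat_nmaxf. tauto. }
      assert (Hmxin : In mx l) by (apply Hc; auto).
      destruct (in_split mx l Hmxin) as [l1 [l2 Heq]].
      apply (IHn chi' e (l1 ++ l2)).
      * subst l. rewrite length_app in *. simpl in Hl. lia.
      * intros c Hc'. apply Hs' in Hc'. destruct Hc' as [Hc1 [z [Hz1 Hz2]]].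
        assert (c <> mx) by (intro; subst; exact (Hmx2 z Hz1 Hz2)).
        pose proof (Hc c Hc1) as Hin. rewrite Heq in Hin.
        apply in_app_or in Hin. apply in_or_app. destruct Hin as [|[|]]; auto; congruence.
      * intros u Hu. apply Hs' in Hu. apply Hirr; tauto.
      * intros u v w Hu Hv Hw. apply Hs' in Hu, Hv, Hw. apply Htr; tauto.
      * intros u v Hu Hv. apply Hs' in Hu, Hv. apply Htot; tauto.
      * apply Hs'. split; auto. exists mx. split; auto.
        destruct (Htot b mx Hb Hmx1 Hbm) as [H|H]; auto. exfalso; exact (Hmx2 b Hb H).
Qed.
End Definable.


Lemma sat_imp {L} (M : structure L) e p q : sat M e (fImp p q) <-> (sat M e p -> sat M e q).
Proof. reflexivity. Qed.
Lemma sat_eqv {L} (M : structure L) e a b : sat M e (fEq (tvar a) (tvar b)) <-> e a = e b.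
Proof. reflexivity. Qed.

Ltac semM H := unfold T3f, T4f, T5f, T6f, T7f, T8f, T9f, T10f, T11f, T12f in H;
  repeat first [rewrite sat_imp in H | rewrite sat_eqv in H | rewrite sat_not in H | rewrite sat_or in H
   | rewrite sat_aKey in H | rewrite sat_aBlk in H | rewrite sat_aInB in H | rewrite sat_aRig in H
   | rewrite sat_aSL in H | rewrite sat_aOrd in H | rewrite sat_AM in H];
  cbv [envl nth] in H.

Section MSide.
Context (M : structure Lw) (HM : is_model (Th M0w) M).

Lemma M3 z z' p : RBlk M z p -> RBlk M z' p -> z = z'.
Proof. pose proof (transfer M0w T3f V3 M HM (envl [z; z'; p] z)) as H. semM H. auto. Qed.
Lemma M4 k x : RBlk M k x -> RKey M k.
Proof. pose proof (transfer M0w T4f V4 M HM (envl [k; x] k)) as H. semM H. auto. Qed.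
Lemma M5 k x : RBlk M k x -> RInB M k x.
Proof. pose proof (transfer M0w T5f V5 M HM (envl [k; x] k)) as H. semM H. auto. Qed.
Lemma M6 t u v y : RInB M t u -> RInB M t v -> RRig M t y -> u <> v -> ROrd M y u v \/ ROrd M y v u.
Proof. pose proof (transfer M0w T6f V6 M HM (envl [t; u; v; y] t)) as H. semM H. auto. Qed.
Lemma M7 y u : ~ ROrd M y u u.
Proof. pose proof (transfer M0w T7f V7 M HM (envl [y; u] y)) as H. semM H. auto. Qed.
Lemma M8 y u v w : ROrd M y u v -> ROrd M y v w -> ROrd M y u w.
Proof. pose proof (transfer M0w T8f V8 M HM (envl [y; u; v; w] y)) as H. semM H. auto. Qed.
Lemma M9 k k' : RKey M k -> RKey M k' -> ~ RRig M k k' -> ~ RRig M k' k -> RSL M k k'.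
Proof. pose proof (transfer M0w T9f V9 M HM (envl [k; k'] k)) as H. semM H. auto. Qed.
Lemma M10 s k k' : RSL M k k' -> (exists l, length l = s /\ forall z, RBlk M k z -> In z l) ->
  (exists l, length l = s /\ forall z, RBlk M k' z -> In z l).
Proof. pose proof (transfer M0w (T10f s) (V10 s) M HM (envl [k; k'] k)) as H. semM H.
  setoid_rewrite sat_aBlk in H. cbv [envl nth scons] in H. auto. Qed.
Lemma M11 z p x : RBlk M z p -> RBlk M z x -> RInB M p x.
Proof. pose proof (transfer M0w T11f V11 M HM (envl [z; p; x] z)) as H. semM H. auto. Qed.
Lemma M12 z p : RBlk M z p -> RRig M p p.
Proof. pose proof (transfer M0w T12f V12 M HM (envl [z; p] z)) as H. semM H. auto. Qed.

Lemma M1 phi kk m (e : nat -> M) : bound (S kk) phi -> sat M e phi ->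
  (exists l, length l = m /\ forall z, sat M (scons z (fun n => e (S n))) phi -> In z l) ->
  exists j, j < kk /\ CR M (e 0) (e (S j)).
Proof. intros Hb Hs Hl. pose proof (transfer M0w (F1f phi kk m) (fun e0 => V1 phi kk m e0 Hb) M HM e) as H.
  rewrite sat_F1f in H. apply NNPP. intro Hn. exact (H Hs Hn Hl). Qed.
Lemma M2 phi kk h (e : nat -> M) : bound (S kk) phi ->
  RKey M (e (S h)) -> (forall j, j < kk -> ~ RRig M (e (S h)) (e (S j))) -> RBlk M (e (S h)) (e 0) ->
  sat M e phi -> forall u, RBlk M (e (S h)) u -> sat M (scons u (fun n => e (S n))) phi.
Proof. intros Hb. pose proof (transfer M0w (F2f phi kk h) (fun e0 => V2 phi kk h e0 Hb) M HM e) as H.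
  rewrite sat_F2f in H. exact H. Qed.
End MSide.


Section Upper.
Context (M : structure Lw) (HM : is_model (Th M0w) M).

Lemma rigid_case (A : M -> Prop) phi kk (a : nat -> M) l t y b :
  bound (S kk) phi -> (forall i, i < kk -> A (a i)) -> A t -> A y -> RRig M t y -> RInB M t b ->
  sat M (scons b a) phi -> (forall c, sat M (scons c a) phi -> In c l) -> acl_n M A 1 b.
Proof.
  intros Hb HA Ht Hy Hr Hib Hs Hc.
  set (e' := fun j => if j <? kk then a j else if j =? kk then t else y).
  assert (HA' : forall j, A (e' j)).
  { intro j; unfold e'. destruct (Nat.ltb_spec j kk); auto. destruct (j =? kk); auto. }
  assert (Hag : forall c, sat M (scons c e') phi <-> sat M (scons c a) phi).
  { intro c. apply (sat_agree M phi (S kk)); auto. intros [|i] Hi; simpl; auto.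
    unfold e'. destruct (Nat.ltb_spec i kk); auto; lia. }
  assert (Het : e' kk = t) by (unfold e'; rewrite Nat.ltb_irrefl, Nat.eqb_refl; auto).
  assert (Hey : e' (S kk) = y).
  { unfold e'. destruct (Nat.ltb_spec (S kk) kk); try lia. destruct (Nat.eqb_spec (S kk) kk); try lia; auto. }
  set (chi := fAnd phi (aInB (S kk) 0)).
  set (O := aOrd (S (S (S kk))) 0 1).
  assert (Hchi : forall c, sat M (scons c e') chi <-> sat M (scons c a) phi /\ RInB M t c).
  { intro c. unfold chi. rewrite sat_and, sat_aInB, Hag. change (scons c e' (S kk)) with (e' kk).
    rewrite Het. tauto. }
  assert (HO : forall u v, sat M (scons u (scons v e')) O <-> ROrd M y u v).
  { intros u v. unfold O. rewrite sat_aOrd. change (scons u (scons v e') (S (S (S kk)))) with (e' (S kk)).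
    rewrite Hey. tauto. }
  destruct (definable_order M O (length l) chi e' l) with (b := b) as [psi [Hp1 Hp2]]; auto.
  - intros c Hc'. apply Hchi in Hc'. apply Hc. tauto.
  - intros u Hu. rewrite HO. apply (M7 M HM).
  - intros u v w _ _ _. rewrite !HO. apply (M8 M HM).
  - intros u v Hu Hv Hne. rewrite !HO. apply Hchi in Hu, Hv. apply (M6 M HM t); tauto.
  - apply Hchi. auto.
  - apply (acl_n_intro M A psi e' b [b]); auto. intros c Hc'. left. symmetry. apply Hp2; auto.
Qed.

Lemma core (A : M -> Prop) b : acl M A b ->
  acl_n M A 1 b \/ exists t l, RKey M t /\ A t /\ (forall y, A y -> ~ RRig M t y) /\
    (forall u, RBlk M t u -> In u l) /\ RBlk M t b.
Proof.
  intros [n [phi [kk [a [Hb [HA [Hs [l [Hl Hc]]]]]]]]].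
  destruct (M1 M HM phi kk (length l) (scons b a) Hb Hs) as [j [Hj HC]].
  { exists l; split; auto. }
  unfold CR in HC. change (scons b a 0) with b in HC. change (scons b a (S j)) with (a j) in HC.
  destruct HC as [Heq | [Hbl | [Hbl | [z [Hz1 Hz2]]]]].
  - left. apply (acl_n_intro M A (fEq (tvar 0) (tvar 1)) (fun _ => a j) b [b]); auto.
    intros c Hc'. left. change (c = a j) in Hc'. congruence.
  - destruct (classic (exists y, A y /\ RRig M (a j) y)) as [[y [Hy Hr]]|Hnr].
    + left. apply (rigid_case A phi kk a l (a j) y b); auto. apply (M5 M HM); auto.
    + right. exists (a j), l. split; [apply (M4 M HM _ b); auto|]. split; auto.
      split; [intros y Hy Hr; apply Hnr; eauto|]. split; auto.
      intros u Hu. apply Hc. apply (M2 M HM phi kk j (scons b a) Hb); auto.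
      * apply (M4 M HM _ b); auto.
      * intros j' Hj' Hr. apply Hnr. exists (a j'). split; auto.
  - left. apply (acl_n_intro M A (aBlk 0 1) (fun _ => a j) b [b]); auto.
    + rewrite sat_aBlk. auto.
    + intros c Hc'. rewrite sat_aBlk in Hc'. left. apply (M3 M HM b c (a j)); auto.
  - left. apply (rigid_case A phi kk a l (a j) (a j) b); auto.
    + apply (M12 M HM z); auto.
    + apply (M11 M HM z); auto.
Qed.

Lemma upper (A : M -> Prop) : exists N, 1 <= N /\ forall b, acl M A b -> acl_n M A N b.
Proof.
  destruct (classic (exists k0 l0, RKey M k0 /\ A k0 /\ (forall y, A y -> ~ RRig M k0 y) /\
     (forall u, RBlk M k0 u -> In u l0))) as [[k0 [l0 [Hk0 [HA0 [Hn0 Hl0]]]]]|HnP].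
  - exists (max 1 (length l0)). split; [lia|]. intros b Hb.
    destruct (core A b Hb) as [H|[t [l [Ht [HAt [Hnt [Hlt Htb]]]]]]].
    + eapply acl_n_mono; eauto; lia.
    + assert (HSL : RSL M k0 t) by (apply (M9 M HM); auto).
      destruct (M10 M HM (length l0) k0 t HSL (ex_intro _ l0 (conj eq_refl Hl0))) as [l' [Hl' Hc']].
      apply (acl_n_intro M A (aBlk 1 0) (fun _ => t) b l'); auto.
      * rewrite sat_aBlk. auto.
      * lia.
      * intros c Hc. rewrite sat_aBlk in Hc. auto.
  - exists 1. split; auto. intros b Hb. destruct (core A b Hb) as [H|[t [l [Ht [HAt [Hnt [Hlt Htb]]]]]]]; auto.
    exfalso. apply HnP. exists t, l. auto.
Qed.
End Upper.

Lemma omega_case : degT_is (Th M0w) dOmega.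
Proof.
  apply degT_omega.
  - constructor. exact (EK 0 0 (fun _ => 0%Z)).
  - intros M HM A. apply upper; auto.
  - apply low_bound.
Qed.


Theorem mainTheorem4 :
  (forall (L : signature) (T : theory L), complete_theory T ->
     exists d : dval, degT_is T d /\ d <> dFin 0) /\
  (forall lam : dval, lam <> dFin 0 ->
     exists (L : signature) (T : theory L), complete_theory T /\ degT_is T lam).
Proof.
  split; [exact part1|].
  intros [n| |] Hn.
  - destruct n as [|n']; [congruence|].
    exists L0, (Th (Mfin (S n'))). split.
    + apply Th_complete. constructor. exact Fin.F1.
    + apply fin_case. lia.
  - exists Lw, (Th M0w). split.
    + apply Th_complete. constructor. exact (EK 0 0 (fun _ => 0%Z)).
    + apply omega_case.
  - exists Linf, (Th Minf). split.
    + apply Th_complete. constructor. exact (existT _ 1 Fin.F1).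
    + apply inf_case.
Qed.
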